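(* Let $\Gamma$ be a finitely generated group equipped with the word metric associated with a finite generating set. Then $\Gamma$ has exponential growth if and only if $h_\infty(\Gamma)=\infty$ (and otherwise $h_\infty(\Gamma)=0$).
   Context: The word metric associated with a generating set $S$ is the path metric of the Cayley graph with vertex set $\Gamma$ and edges $\{\gamma,\gamma s\}$, $s\in S$. Non-decreasing functions $f,g\colon\mathbb N\to\mathbb N\cup\{\infty\}$ are equivalent if there is $D\in\mathbb N$ with $f(r)\le Dg(Dr)$ and $g(r)\le Df(Dr)$ for all $r$; $\Gamma$ has exponential growth if $r\mapsto|B(e,r)|$ is equivalent to $r\mapsto\exp(r)$. Coarse entropy $h_\infty(X)=\lim_{\delta\to\infty}\lim_{R\to\infty}\limsup_{n\to\infty}\frac1n\log s(n,R,\delta,x_0)$, where $s(n,R,\delta,x_0)$ is the supremum of cardinalities of $R$-separated sets of $\delta$-paths $(x_0,\dots,x_n)$ ($d(x_i,x_{i+1})\le\delta$) starting at $x_0$, paths compared by $\max_i d(x_i,y_i)$. *)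

(* Defs.v *)
From HB Require Import structures.
From mathcomp Require Import all_boot all_order all_algebra.
From mathcomp Require Import finmap.
From mathcomp Require Import all_classical all_reals all_analysis.

Set Implicit Arguments.
Unset Strict Implicit.
Unset Printing Implicit Defensive.

Import Order.TTheory GRing.Theory Num.Theory.
Local Open Scope classical_set_scope.
Local Open Scope ring_scope.

Section CoarseEntropy.
Variable G : groupType.

Definition generates (S : seq G) : Prop :=
  forall H : G -> Prop,
    H 1%g -> (forall x y, H x -> H y -> H (x * y)%g) -> (forall x, H x -> H (x^-1)%g) ->
    (forall s, s \in S -> H s) -> forall g, H g.

Definition cayley_edge (S : seq G) (a b : G) : Prop :=
  exists2 s, s \in S & (b = a * s)%g \/ (a = b * s)%g.

Definition cayley_path_len (S : seq G) (x y : G) (n : nat) : Prop :=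
  exists p : nat -> G, [/\ p 0%N = x, p n = y &
                          forall i, (i < n)%N -> cayley_edge S (p i) (p i.+1)].

Lemma cayley_ex_asbool (S : seq G) (x y : G) :
  (exists n, cayley_path_len S x y n) -> exists n, `[< cayley_path_len S x y n >].
Proof. by case=> n Hn; exists n; apply/asboolP. Qed.

(* Word metric = path metric of the Cayley graph (0 if no path, which never
   happens for a generating set). *)
Definition wdist (S : seq G) (x y : G) : nat :=
  match pselect (exists n, cayley_path_len S x y n) with
  | left H => ex_minn (cayley_ex_asbool H)
  | right _ => 0%N
  end.

Definition growth (S : seq G) (r : nat) : nat :=
  #|` fset_set [set g : G | (wdist S 1%g g <= r)%N] |%fset.

Variable R : realType.

(* exponential growth: r |-> |B(e,r)| is equivalent to r |-> exp r *)
Definition exp_growth (S : seq G) : Prop :=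
  exists D : nat, forall r : nat,
    ((growth S r)%:R <= D%:R * expR (D%:R * r%:R) :> R) /\
    (expR r%:R <= D%:R * (growth S (D * r))%:R :> R).

Definition ecard (T : choiceType) (A : set T) : \bar R :=
  if pselect (finite_set A) then ((#|` fset_set A|%fset)%:R)%:E else +oo%E.

Definition dpath (S : seq G) (n : nat) (delta : R) (x0 : G)
    (p : {ffun 'I_n.+1 -> G}) : Prop :=
  p ord0 = x0 /\
  forall i : 'I_n, ((wdist S (p (widen_ord (leqnSn n) i)) (p (lift ord0 i)))%:R <= delta).

Definition pdist (S : seq G) (n : nat) (p q : {ffun 'I_n.+1 -> G}) : nat :=
  \max_(i < n.+1) wdist S (p i) (q i).

Definition separated (S : seq G) (n : nat) (Rad : R)
    (P : set {ffun 'I_n.+1 -> G}) : Prop :=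
  forall p q, P p -> P q -> p <> q -> Rad <= (pdist S p q)%:R.

Definition spath (S : seq G) (n : nat) (Rad delta : R) (x0 : G) : \bar R :=
  ereal_sup [set ecard P | P in
    [set P : set {ffun 'I_n.+1 -> G} | P `<=` dpath S delta x0 /\ separated S Rad P]].

Definition hinf (S : seq G) : \bar R :=
  lim ((lim ((limn_esup (fun n : nat =>
                ((n%:R)^-1)%:E * lne (spath S n Rad delta 1%g))%E)
             @[Rad --> +oo]))
       @[delta --> +oo]).

End CoarseEntropy.

(* Main.v *)
Require Import Defs.
From HB Require Import structures.
From mathcomp Require Import all_boot all_order all_algebra.
From mathcomp Require Import finmap.
From mathcomp Require Import all_classical all_reals all_analysis.
From mathcomp Require Import zify ring lra.

Set Implicit Arguments.
Unset Strict Implicit.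
Unset Printing Implicit Defensive.
Import Order.TTheory GRing.Theory Num.Theory.
Local Open Scope classical_set_scope.

Section Metric.
Variable G : groupType.
Variable S : seq G.
Local Open Scope group_scope.

Local Notation len := (cayley_path_len S).

Lemma edge_sym a b : cayley_edge S a b -> cayley_edge S b a.
Proof. by case=> s sS [] h; exists s => //; [right|left]. Qed.

Lemma edge_mul g a b : cayley_edge S a b -> cayley_edge S (g * a) (g * b).
Proof. by case=> s sS [] ->; exists s => //; [left|right]; rewrite mulgA. Qed.

Lemma len_refl x : len x x 0.
Proof. by exists (fun _ => x); split. Qed.

Lemma len_cat x y z a b : len x y a -> len y z b -> len x z (a + b).
Proof.
case=> p [p0 pa pe] [q [q0 qb qe]].
exists (fun i => if (i <= a)%N then p i else q (i - a)%N); split.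
- by rewrite leq0n.
- case: (leqP (a + b) a) => h.
    have b0 : b = 0%N by lia.
    by subst b; rewrite addn0 pa -qb q0.
  by rewrite addKn.
move=> i ilt; case: (ltnP i a) => ia.
  by rewrite (ltnW ia); apply: pe.
case: (leqP i a) => ia'.
  have e : i = a by apply/eqP; rewrite eqn_leq ia ia'.
  subst i; rewrite pa -q0 subSn // subnn.
  by apply: qe; lia.
rewrite subSn; last exact: ltnW.
by apply: qe; lia.
Qed.

Lemma len_rev x y a : len x y a -> len y x a.
Proof.
case=> p [p0 pa pe]; exists (fun i => p (a - i)%N); split.
- by rewrite subn0.
- by rewrite subnn.
move=> i ia; apply: edge_sym.
have -> : (a - i = (a - i.+1).+1)%N by lia.
by apply: pe; lia.
Qed.

Lemma len_mul g x y a : len x y a -> len (g * x) (g * y) a.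
Proof.
case=> p [p0 pa pe]; exists (fun i => g * p i); split.
- by rewrite p0.
- by rewrite pa.
by move=> i ia; apply: edge_mul; apply: pe.
Qed.

Lemma len_edge x s : s \in S -> len x (x * s) 1.
Proof.
move=> sS; exists (fun i => if i is 0%N then x else x * s); split => //.
by case=> // _; exists s => //; left.
Qed.

Lemma len_sub x y a p : p 0%N = x -> p a = y ->
  (forall i, (i < a)%N -> cayley_edge S (p i) (p i.+1)) ->
  forall i j, (i <= j <= a)%N -> len (p i) (p j) (j - i).
Proof.
move=> p0 pa pe i j /andP[ij ja]; exists (fun k => p (i + k)%N); split.
- by rewrite addn0.
- by rewrite subnKC.
by move=> k kl; rewrite addnS; apply: pe; lia.
Qed.

Hypothesis hS : generates S.

Lemma reach1 g : exists n, len 1 g n.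
Proof.
apply: (hS (H := fun g => exists n, len 1 g n)).
- by exists 0%N; apply: len_refl.
- move=> x y [a ha] [b hb]; exists (a + b)%N; apply: len_cat ha _.
  by have := len_mul x hb; rewrite mulg1.
- move=> x [a ha]; exists a; apply: len_rev.
  by have := len_mul x^-1 ha; rewrite mulg1 mulVg.
- by move=> s sS; exists 1%N; have := len_edge 1 sS; rewrite mul1g.
Qed.

Lemma reach x y : exists n, len x y n.
Proof.
have [n hn] := reach1 (x^-1 * y); exists n.
by have := len_mul x hn; rewrite mulg1 mulVKg.
Qed.

Lemma wdist_spec x y : len x y (wdist S x y) /\
  forall n, len x y n -> (wdist S x y <= n)%N.
Proof.
rewrite /wdist; case: pselect => [H|H]; last by exfalso; apply: H; apply: reach.
case: ex_minnP => m /asboolP hm hmin; split => // n hn.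
by apply: hmin; apply/asboolP.
Qed.

Lemma wdist_len x y : len x y (wdist S x y).
Proof. by case: (wdist_spec x y). Qed.

Lemma wdist_le x y n : len x y n -> (wdist S x y <= n)%N.
Proof. by case: (wdist_spec x y) => _; apply. Qed.

Lemma wdistxx x : wdist S x x = 0%N.
Proof. by apply/eqP; rewrite -leqn0; apply: wdist_le; apply: len_refl. Qed.

Lemma wdist_tri x y z : (wdist S x z <= wdist S x y + wdist S y z)%N.
Proof. by apply: wdist_le; apply: len_cat; apply: wdist_len. Qed.

Lemma wdist_sym x y : wdist S x y = wdist S y x.
Proof.
by apply/eqP; rewrite eqn_leq !wdist_le //; apply: len_rev; apply: wdist_len.
Qed.

Lemma wdist_mul g x y : wdist S (g * x) (g * y) = wdist S x y.
Proof.
apply/eqP; rewrite eqn_leq; apply/andP; split.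
  by apply: wdist_le; apply: len_mul; apply: wdist_len.
apply: wdist_le; have := len_mul g^-1 (wdist_len (g * x) (g * y)).
by rewrite !mulKg.
Qed.

Lemma wdist_eq0 x y : wdist S x y = 0%N -> x = y.
Proof. by move=> h; have := wdist_len x y; rewrite h => -[p [<- <- _]]. Qed.

Lemma wdist_edge x s : s \in S -> (wdist S x (x * s) <= 1)%N.
Proof. by move=> sS; apply: wdist_le; apply: len_edge. Qed.

Lemma geodesic c : exists p : nat -> G,
  [/\ p 0%N = 1, p (wdist S 1 c) = c &
      forall i j, (i <= j <= wdist S 1 c)%N -> (wdist S (p i) (p j) <= j - i)%N].
Proof.
have [p [p0 pa pe]] := wdist_len 1 c; exists p; split => // i j hij.
by apply: wdist_le; apply: len_sub hij.
Qed.

End Metric.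

Set Implicit Arguments.
Unset Strict Implicit.
Unset Printing Implicit Defensive.
Import Order.TTheory GRing.Theory Num.Theory.
Local Open Scope classical_set_scope.

Lemma card_inj_fsub (T U : choiceType) (A : {fset T}) (B : {fset U}) (f : T -> U) :
  {in A &, injective f} -> (forall x, x \in A -> f x \in B) -> (#|` A| <= #|` B|)%N.
Proof.
move=> fi fAB; move/card_in_imfsetP: fi => /eqP <-.
apply: fsubset_leq_card; apply/fsubsetP => y /imfsetP [x /= xA ->]; exact: fAB.
Qed.

Lemma set_inj_finite (T U : choiceType) (P : set T) (f : T -> U) (Q : {fset U}) :
  (forall x y, P x -> P y -> f x = f y -> x = y) -> (forall x, P x -> f x \in Q) ->
  finite_set P /\ (#|` fset_set P| <= #|` Q|)%N.
Proof.
move=> fi fPQ.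
have Pfin : finite_set P.
  case: (pselect (exists x, P x)) => [[x0 Px0]|nP]; last first.
    have -> : P = set0 by apply/seteqP; split => x // Px; apply: nP; exists x.
    exact: finite_set0.
  pose g (u : U) : T := if pselect (exists x, P x /\ f x = u) is left h
    then projT1 (cid h) else x0.
  apply: (@sub_finite_set _ _ (g @` (f @` P))); last first.
    apply: finite_image; apply: (@sub_finite_set _ _ [set` Q]) ; last exact: finite_fset.
    by move=> _ [x Px <-]; apply: fPQ.
  move=> x Px; exists (f x); first by exists x.
  rewrite /g; case: pselect => [h|[]]; last by exists x.
  by case: (cid h) => y [Py fy] /=; apply: fi.
split => //; apply: (@card_inj_fsub _ _ _ _ f).
  by move=> x y; rewrite !in_fset_set // !inE; apply: fi.
by move=> x; rewrite in_fset_set // inE; apply: fPQ.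
Qed.

Section Balls.
Variable G : groupType.
Variable S : seq G.
Hypothesis hS : generates S.
Local Open Scope group_scope.

Definition wball (x : G) (r : nat) : set G := [set g | (wdist S x g <= r)%N].

Definition sx : seq G := 1 :: S ++ map (fun s => s^-1) S.

Fixpoint W (r : nat) : seq G :=
  if r is r'.+1 then [seq x * y | x <- W r', y <- sx] else [:: 1].

Lemma W_S r : W r.+1 = [seq x * y | x <- W r, y <- sx]. Proof. by []. Qed.

Lemma size_W r : size (W r) = (size sx ^ r)%N.
Proof. elim: r => [|r IH] //. by rewrite W_S size_allpairs IH expnS mulnC. Qed.

Lemma ball_W r g : (wdist S 1 g <= r)%N -> g \in W r.
Proof.
elim: r g => [|r IH] g hg.
  have h : wdist S 1 g = 0%N by apply/eqP; rewrite -leqn0.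
  by rewrite -(wdist_eq0 hS h) mem_seq1.
case: (leqP (wdist S 1 g) r) => h.
  rewrite -(mulg1 g) W_S; apply/allpairsP; exists (g, 1) => /=.
  by rewrite IH // mem_head.
have e : wdist S 1 g = r.+1 by apply/eqP; rewrite eqn_leq hg h.
have [p [p0 pa pe]] := wdist_len hS 1 g; rewrite e in pa pe.
have hr : (wdist S 1 (p r) <= r)%N.
  have hl := @len_sub _ _ _ _ _ p p0 pa pe 0 r (leqnSn r : (0 <= r <= r.+1)%N).
  by rewrite p0 subn0 in hl; apply: wdist_le hS _ _ _ hl.
have [s sS hs] := pe r (ltnSn r); rewrite pa in hs.
rewrite W_S; apply/allpairsP; case: hs => hs.
  exists (p r, s) => /=; split => //; first exact: IH.
  by rewrite /sx inE mem_cat sS orbT.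
exists (p r, s^-1) => /=; split.
- exact: IH.
- by rewrite /sx inE mem_cat map_f ?orbT.
- by rewrite hs mulgK.
Qed.

Lemma ball_finite x r : finite_set (wball x r).
Proof.
apply: (@sub_finite_set _ _ ((fun g => x * g) @` [set` seq_fset tt (W r)])).
  move=> g hg; exists (x^-1 * g); last by rewrite mulVKg.
  suff : x^-1 * g \in seq_fset tt (W r) by [].
  rewrite seq_fsetE; apply: ball_W.
  by rewrite -(wdist_mul hS x) mulg1 mulVKg.
by apply: finite_image; apply: finite_fset.
Qed.

Lemma growth_ball x r : #|` fset_set (wball x r)| = growth S r.
Proof.
have f1 := ball_finite x r.
have f2 : finite_set [set g : G | (wdist S 1 g <= r)%N] := ball_finite 1 r.
rewrite /growth; apply/eqP; rewrite eqn_leq; apply/andP; split.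
  apply: (@card_inj_fsub _ _ _ _ (fun g => x^-1 * g)).
    by move=> a b _ _; apply: mulgI.
  move=> g; rewrite !in_fset_set //.
  by rewrite !inE /wball /= -(wdist_mul hS x^-1) mulVg.
apply: (@card_inj_fsub _ _ _ _ (fun g => x * g)).
  by move=> a b _ _; apply: mulgI.
move=> g; rewrite !in_fset_set //.
by rewrite !inE /wball /= -(wdist_mul hS x) mulg1.
Qed.

Lemma growth_le r : (growth S r <= size sx ^ r)%N.
Proof.
rewrite -size_W; apply: (@leq_trans #|` seq_fset tt (W r)|); last first.
  by rewrite size_seq_fset size_undup.
apply: fsubset_leq_card; apply/fsubsetP => g.
rewrite in_fset_set; last exact: (ball_finite 1 r).
by rewrite inE seq_fsetE; apply: ball_W.
Qed.

Lemma growth_ge1 r : (1 <= growth S r)%N.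
Proof.
rewrite -(growth_ball 1) cardfs_gt0; apply/eqP => h.
have : (1 : G) \in fset_set (wball 1 r).
  by rewrite in_fset_set ?inE /wball /= ?(wdistxx hS) //; exact: ball_finite.
by rewrite h inE.
Qed.

End Balls.

Set Implicit Arguments.
Unset Strict Implicit.
Unset Printing Implicit Defensive.
Import Order.TTheory GRing.Theory Num.Theory.

Section Nets.
Variable G : groupType.
Variable S : seq G.
Hypothesis hS : generates S.
Local Open Scope group_scope.
Local Open Scope fset_scope.

Lemma net_ex (t : nat) : forall n (A : {fset G}), (#|` A| <= n)%N ->
  exists N : {fset G}, [/\ N `<=` A,
    (forall x y, x \in N -> y \in N -> x != y -> (t.+1 <= wdist S x y)%N) &
    (#|` A| <= #|` N| * growth S t)%N].
Proof.
elim=> [|n IH] A hA.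
  exists fset0; split; [exact: fsub0set | by move=> x y; rewrite inE | ].
  by move: hA; rewrite leqn0 => /eqP ->.
have [A0|[a aA]] := fset_0Vmem A.
  exists fset0; split; [exact: fsub0set | by move=> x y; rewrite inE | ].
  by rewrite A0.
pose A' := [fset y in A | (t.+1 <= wdist S a y)%N].
have aA' : a \notin A' by rewrite !inE (wdistxx hS) andbF.
have A'A : A' `<=` A by apply/fsubsetP => y; rewrite !inE => /andP[].
have hA' : (#|` A'| <= n)%N.
  have : (#|` A'| < #|` A|)%N.
    rewrite (cardfsD1 a A) aA add1n ltnS; apply: fsubset_leq_card.
    by apply/fsubsetP => y yA'; rewrite !inE (fsubsetP A'A _ yA') andbT;
       apply: contraNneq aA' => <-.
  by move=> h; rewrite -ltnS (leq_trans h).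
have [N' [N'A' N'sep N'card]] := IH A' hA'.
exists (a |` N'); split.
- apply/fsubsetP => y; rewrite !inE => /orP[/eqP ->//|yN'].
  exact: (fsubsetP A'A _ (fsubsetP N'A' _ yN')).
- move=> x y; rewrite !inE => /orP[/eqP ->|xN'] /orP[/eqP ->|yN'] xy.
  + by rewrite eqxx in xy.
  + by have := fsubsetP N'A' _ yN'; rewrite !inE => /andP[].
  + have := fsubsetP N'A' _ xN'; rewrite !inE => /andP[_].
    by rewrite wdist_sym.
  + exact: N'sep.
- have aN' : a \notin N' by apply: contra aA' => /(fsubsetP N'A').
  rewrite cardfsU1 aN' add1n mulSn.
  pose B := [fset y in A | (wdist S a y <= t)%N].
  have AU : A `<=` A' `|` B.
    apply/fsubsetP => y yA; rewrite !inE yA /=.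
    by case: leqP.
  apply: (leq_trans (fsubset_leq_card AU)); rewrite addnC.
  apply: (leq_trans (leq_card_fsetU _ _)); apply: leq_add => //.
  rewrite -(growth_ball hS a t).
  apply: (@card_inj_fsub _ _ _ _ id) => // y; rewrite !inE => /andP[_ h].
  by rewrite in_fset_set ?inE //; exact: ball_finite.
Qed.

End Nets.

Set Implicit Arguments.
Unset Strict Implicit.
Unset Printing Implicit Defensive.
Import Order.TTheory GRing.Theory Num.Theory.

Lemma card_imfsetT (T : finType) (U : choiceType) (f : T -> U) :
  injective f -> #|` [fset f x | x : T]%fset| = #|T|.
Proof.
move=> fi; rewrite card_imfset //.
have := card_finset (T := T) predT.
by rewrite (card_imfset _ _ (@inj_id T)) => <-.
Qed.

Lemma leq_card_imfsetT (T : finType) (U : choiceType) (f : T -> U) :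
  (#|` [fset f x | x : T]%fset| <= #|T|)%N.
Proof.
apply: (leq_trans (leq_imfset_card _ _ _)).
have := card_finset (T := T) predT.
by rewrite (card_imfset _ _ (@inj_id T)) => <-.
Qed.

Lemma card_fsubT (K : choiceType) (A : {fset K}) : #|{: A}| = #|` A|.
Proof. by rewrite -cardfE. Qed.

Section Paths.
Variable G : groupType.
Variable S : seq G.
Hypothesis hS : generates S.
Variable R : realType.
Local Open Scope group_scope.

Definition pn n (p : {ffun 'I_n.+1 -> G}) (i : nat) : G := p (inord i).

Lemma pnE n (p : {ffun 'I_n.+1 -> G}) (i : 'I_n.+1) : p i = pn p i.
Proof. by rewrite /pn inord_val. Qed.

Lemma dpath0 n (delta : R) x0 (p : {ffun 'I_n.+1 -> G}) : dpath S delta x0 p -> pn p 0 = x0.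
Proof.
by case=> h _; rewrite /pn; have -> : inord 0 = ord0 :> 'I_n.+1 by apply: val_inj; rewrite /= inordK.
Qed.

Lemma dpath_step n (delta : R) x0 (p : {ffun 'I_n.+1 -> G}) i : dpath S delta x0 p -> (i < n)%N ->
  (wdist S (pn p i) (pn p i.+1) <= Num.truncn delta)%N.
Proof.
case=> _ h hi; have := h (Ordinal hi).
have -> : widen_ord (leqnSn n) (Ordinal hi) = inord i.
  by apply: val_inj; rewrite /= inordK // ltnW.
have -> : lift ord0 (Ordinal hi) = inord i.+1.
  by apply: val_inj; rewrite /= inordK.
move=> hd; rewrite truncn_ge_nat //.
by apply: le_trans hd; rewrite ler0n.
Qed.

Lemma dpath_chain n (delta : R) x0 (p : {ffun 'I_n.+1 -> G}) a b : dpath S delta x0 p -> (a <= b <= n)%N ->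
  (wdist S (pn p a) (pn p b) <= (b - a) * Num.truncn delta)%N.
Proof.
move=> hp /andP[ab bn]; elim: b ab bn => [|b IH] ab bn.
  by move: ab; rewrite leqn0 => /eqP ->; rewrite (wdistxx hS).
case: (leqP a b) => h.
  apply: (leq_trans (wdist_tri hS _ (pn p b) _)).
  have := IH h (ltnW bn); have := dpath_step hp bn.
  rewrite subSn // mulSn; lia.
have -> : a = b.+1 by apply/eqP; rewrite eqn_leq ab h.
by rewrite (wdistxx hS).
Qed.

Lemma spath_upper n (Rad delta : R) (kb : nat) : (0 <= delta)%R -> (0 < kb)%N ->
  ((2 * kb * Num.truncn delta)%:R < Rad)%R ->
  (spath S n Rad delta 1 <=
    ((growth S (kb * Num.truncn delta) ^ (n %/ kb))%N%:R)%:E)%E.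
Proof.
move=> d0 kb0 hRad; apply: ge_ereal_sup => _ [P [Psub Psep] <-].
set dn := Num.truncn delta; set J := (n %/ kb)%N.
pose Bf := fset_set (wball S 1 (kb * dn)).
have Bfin : finite_set (wball S 1 (kb * dn)) := ball_finite hS 1 (kb * dn).
have h1 : (1 : G) \in Bf.
  by rewrite in_fset_set // inE /wball /= (wdistxx hS).
pose b0 : Bf := [` h1]%fset.
pose toG (f : {ffun 'I_J -> Bf}) : {ffun 'I_J -> G} := [ffun j => val (f j)].
pose Q := [fset toG f | f : {ffun 'I_J -> Bf}]%fset.
pose psi (p : {ffun 'I_n.+1 -> G}) : {ffun 'I_J -> G} :=
  [ffun j : 'I_J => (pn p (j * kb))^-1 * pn p (j.+1 * kb)].
have jkb (j : 'I_J) : (j.+1 * kb <= n)%N.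
  by have := ltn_ord j; rewrite /J leq_divRL.
have [Pfin Pcard] : finite_set P /\ (#|` fset_set P| <= #|` Q|)%N.
  apply: (@set_inj_finite _ _ P psi Q).
    move=> p q Pp Pq hpq; apply: contrapT => pq.
    have := Psep p q Pp Pq pq; apply/negP; rewrite -ltNge.
    apply: le_lt_trans hRad; rewrite ler_nat.
    have hp := Psub p Pp; have hq := Psub q Pq.
    have eqpre : forall j, (j <= J)%N -> pn p (j * kb) = pn q (j * kb).
      elim=> [|j IH] hj; first by rewrite !mul0n (dpath0 hp) (dpath0 hq).
      have := congr1 (fun f : {ffun 'I_J -> G} => f (Ordinal hj)) hpq.
      rewrite /psi !ffunE /= (IH (ltnW hj)) => /mulgI; exact.
    apply/bigmax_leqP => i _.
    rewrite !pnE.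
    set a := ((i %/ kb) * kb)%N.
    have ai : (a <= i)%N by rewrite /a leq_trunc_div.
    have ia : (i - a < kb)%N.
      by rewrite /a {1}(divn_eq i kb) addKn ltn_mod.
    have iN : (i <= n)%N by rewrite -ltnS ltn_ord.
    have an : (a <= n)%N := leq_trans ai iN.
    have hpa : pn p a = pn q a.
      by apply: eqpre; rewrite /J leq_div2r // -ltnS ltn_ord.
    have aiN : (a <= i <= n)%N by rewrite ai iN.
    have d1 := dpath_chain hp aiN; have d2 := dpath_chain hq aiN.
    have t1 := wdist_tri hS (pn p i) (pn p a) (pn q i).
    rewrite (wdist_sym hS (pn p i) (pn p a)) hpa in t1.
    have : ((i - a) * dn <= kb * dn)%N by rewrite leq_mul2r ltnW ?orbT.
    rewrite -/dn -hpa in d1 d2 *; rewrite -hpa in t1.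
    lia.
  move=> p Pp; apply/imfsetP.
  exists [ffun j => insubd b0 (psi p j)] => //.
  apply/ffunP => j; rewrite /toG !ffunE insubdK //.
  change ((pn p (j * kb))^-1 * pn p (j.+1 * kb) \in Bf).
  rewrite in_fset_set // inE /wball /= -(wdist_mul hS (pn p (j * kb))) mulg1 mulVKg.
  have hjk : (j * kb <= j.+1 * kb <= n)%N by rewrite jkb leq_mul2r leqnSn orbT.
  by have := dpath_chain (Psub p Pp) hjk; rewrite mulSn addnK.
have -> : ecard R P = (#|` fset_set P|%:R)%:E.
  by rewrite /ecard; case: pselect.
rewrite lee_fin ler_nat; apply: (leq_trans Pcard).
apply: (leq_trans (leq_card_imfsetT _)).
by rewrite card_ffun card_ord card_fsubT growth_ball.
Qed.
End Paths.

Set Implicit Arguments.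
Unset Strict Implicit.
Unset Printing Implicit Defensive.
Import Order.TTheory GRing.Theory Num.Theory.

Fixpoint xpf (G : groupType) (c : nat -> G) (j : nat) : G :=
  if j is j'.+1 then (xpf c j' * c j')%g else 1%g.

Section Lower.
Variable G : groupType.
Variable S : seq G.
Hypothesis hS : generates S.
Variable R : realType.
Local Open Scope group_scope.

Variables (dn m t J : nat) (N : {fset G}).
Hypothesis m0 : (0 < m)%N.
Hypothesis NB : forall x, x \in N -> (wdist S 1 x <= m * dn)%N.
Hypothesis Nsep : forall x y, x \in N -> y \in N -> x != y -> (t.+1 <= wdist S x y)%N.

Definition geo (c : G) : nat -> G := projT1 (cid (geodesic hS c)).

Lemma geoP c : [/\ geo c 0%N = 1, geo c (wdist S 1 c) = c &
      forall i j, (i <= j <= wdist S 1 c)%N -> (wdist S (geo c i) (geo c j) <= j - i)%N].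
Proof. by rewrite /geo; case: cid. Qed.

Definition gam (c : G) (k : nat) : G := geo c (minn (k * dn) (wdist S 1 c)).

Lemma gam0 c : gam c 0 = 1.
Proof. by rewrite /gam mul0n min0n; case: (geoP c). Qed.

Lemma gamm c : (wdist S 1 c <= m * dn)%N -> gam c m = c.
Proof. by move=> h; rewrite /gam (minn_idPr h); case: (geoP c). Qed.

Lemma gam_step c k : (wdist S (gam c k) (gam c k.+1) <= dn)%N.
Proof.
case: (geoP c) => _ _ h; rewrite /gam.
have hh : (minn (k * dn) (wdist S 1 c) <= minn (k.+1 * dn) (wdist S 1 c) <= wdist S 1 c)%N.
  rewrite geq_minr andbT; have : (k * dn <= k.+1 * dn)%N by rewrite leq_mul2r leqnSn orbT.
  lia.
apply: (leq_trans (h _ _ hh)); rewrite mulSn; lia.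
Qed.

Local Notation T := {ffun 'I_J -> N}.

Definition cv (f : T) (j : nat) : G := if insub j is Some k then val (f k) else 1.

Lemma cvE (f : T) (k : 'I_J) : cv f k = val (f k).
Proof. by rewrite /cv valK. Qed.

Lemma cvB (f : T) j : (wdist S 1 (cv f j) <= m * dn)%N.
Proof.
rewrite /cv; case: insubP => [k _ _|_]; last by rewrite (wdistxx hS).
by apply: NB; apply: fsvalP.
Qed.

Definition pt (f : T) (i : nat) : G :=
  xpf (cv f) (i %/ m) * gam (cv f (i %/ m)) (i %% m).

Lemma pt0 f : pt f 0 = 1.
Proof. by rewrite /pt div0n mod0n gam0 mulg1. Qed.

Lemma pt_mul f j : pt f (j * m) = xpf (cv f) j.
Proof. by rewrite /pt mulnK // modnMl gam0 mulg1. Qed.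

Lemma pt_step f i : (wdist S (pt f i) (pt f i.+1) <= dn)%N.
Proof.
set q := (i %/ m)%N; set r := (i %% m)%N.
have ei : i = (q * m + r)%N by rewrite /q /r -divn_eq.
have rm : (r < m)%N by rewrite /r ltn_mod.
case: (ltnP r.+1 m) => h.
  have e1 : (i.+1 %/ m)%N = q.
    by rewrite ei -addnS divnMDl // divn_small // addn0.
  have e2 : (i.+1 %% m)%N = r.+1.
    by rewrite ei -addnS modnMDl modn_small.
  by rewrite /pt e1 e2 -/q -/r (wdist_mul hS); apply: gam_step.
have rm1 : r.+1 = m by apply/eqP; rewrite eqn_leq rm h.
have e0 : i.+1 = (q.+1 * m)%N by rewrite ei -addnS rm1 mulSn addnC.
rewrite e0 pt_mul /= /pt -/q -/r (wdist_mul hS) -{2}(gamm (cvB f q)) -rm1.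
exact: gam_step.
Qed.

Definition Phi (f : T) : {ffun 'I_(J * m).+1 -> G} := [ffun i : 'I_(J * m).+1 => pt f (val i)].

Lemma Phi_pn f i : (i <= J * m)%N -> pn (Phi f) i = pt f i.
Proof. by move=> h; rewrite /pn ffunE /= inordK. Qed.

Lemma Phi_dpath (delta : R) f : dn = Num.truncn delta -> (0 <= delta)%R ->
  dpath S delta 1 (Phi f).
Proof.
move=> hdn d0; split.
  by rewrite ffunE /= pt0.
move=> i; rewrite !ffunE /=.
have h := pt_step f i.
apply: (@le_trans _ _ (dn%:R)%R); first by rewrite ler_nat.
by rewrite hdn truncn_le.
Qed.

Lemma Phi_sep f g : f != g -> (t.+1 <= pdist S (Phi f) (Phi g))%N.
Proof.
move=> fg.
have [k hk] : exists k : 'I_J, f k != g k.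
  apply/existsP; move: fg; apply: contraR; rewrite negb_exists => /forallP h.
  by apply/eqP/ffunP => k; have := h k; rewrite negbK => /eqP.
have ex : exists j, cv f j != cv g j.
  exists (val k); rewrite !cvE; apply: contra hk => /eqP h; apply/eqP; exact: val_inj.
have [j hj hmin] := ex_minnP ex.
have jJ : (j < J)%N.
  rewrite ltnNge; apply/negP => h; move: hj.
  by rewrite /cv !insubF ?eqxx //; apply/negbTE; rewrite -leqNgt.
have pre : forall i, (i <= j)%N -> xpf (cv f) i = xpf (cv g) i.
  elim=> [|i IH] hi //=; rewrite IH ?(ltnW hi) //.
  congr (_ * _); apply/eqP; apply: contraT => h.
  by have := hmin _ h; rewrite leqNgt hi.
have I1 : (j.+1 * m <= J * m)%N by rewrite leq_mul2r jJ orbT.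
apply: (leq_trans _ (leq_bigmax (inord (j.+1 * m)))).
rewrite /= !ffunE /= inordK ?ltnS // !pt_mul /= pre // (wdist_mul hS).
have := cvE f (Ordinal jJ); have := cvE g (Ordinal jJ); rewrite /= => -> ->.
apply: Nsep; try exact: fsvalP.
by move: hj; have := cvE f (Ordinal jJ); have := cvE g (Ordinal jJ); rewrite /= => -> ->.
Qed.

End Lower.

Set Implicit Arguments.
Unset Strict Implicit.
Unset Printing Implicit Defensive.
Import Order.TTheory GRing.Theory Num.Theory.
Local Open Scope classical_set_scope.

Lemma ecard_fin (R : realType) (T : choiceType) (A : set T) : finite_set A ->
  ecard R A = ((#|` fset_set A|%:R)%:E)%E.
Proof. by move=> h; rewrite /ecard; case: pselect. Qed.

Section Spath.
Variable G : groupType.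
Variable S : seq G.
Hypothesis hS : generates S.
Variable R : realType.

Lemma pdistxx n (p : {ffun 'I_n.+1 -> G}) : pdist S p p = 0%N.
Proof.
apply/eqP; rewrite -leqn0; apply/bigmax_leqP => i _.
by rewrite (wdistxx hS).
Qed.

Lemma spath_lower (Rad delta : R) (dn m t J : nat) (N : {fset G}) :
  (0 < m)%N ->
  (forall x, x \in N -> (wdist S 1 x <= m * dn)%N) ->
  (forall x y, x \in N -> y \in N -> x != y -> (t.+1 <= wdist S x y)%N) ->
  dn = Num.truncn delta -> (0 <= delta)%R -> (Rad <= t.+1%:R)%R ->
  ((((#|` N| ^ J)%N)%:R)%:E <= spath S (J * m) Rad delta 1%g)%E.
Proof.
move=> m0 NB Nsep hdn d0 hR.
set Ph := Phi hS dn m (J := J) (N := N).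
have Psep f g : f != g -> (t.+1 <= pdist S (Ph f) (Ph g))%N := @Phi_sep _ _ hS dn m t J N m0 Nsep f g.
have Pinj : injective Ph.
  move=> f g e; apply/eqP; apply: contraT => fg.
  by have := Psep _ _ fg; rewrite e pdistxx.
apply: ereal_sup_ubound; exists (range Ph).
  split.
    by move=> _ [f _ <-]; apply: (Phi_dpath hS m0 NB).
  move=> x y [f _ <-] [g _ <-] ne.
  have fg : f != g by apply/eqP => e; apply: ne; rewrite e.
  by apply: le_trans hR _; rewrite ler_nat; apply: Psep.
have fin : finite_set (range Ph) by apply: finite_image; exact: finite_finset.
rewrite ecard_fin //.
have -> : fset_set (range Ph) = [fset Ph f | f : {ffun 'I_J -> N}]%fset.
  apply/fsetP => x; rewrite in_fset_set //.
  apply/idP/imfsetP => [/set_mem [f _ <-]|[f _ ->]]; first by exists f.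
  by apply/mem_set; exists f.
by rewrite card_imfsetT // card_ffun card_ord card_fsubT.
Qed.

Lemma spath_ge1 n (Rad delta : R) : (0 <= delta)%R -> (1 <= spath S n Rad delta 1%g)%E.
Proof.
move=> d0; pose p : {ffun 'I_n.+1 -> G} := [ffun=> 1%g].
apply: ereal_sup_ubound; exists [set p].
  split.
    move=> _ ->; split; first by rewrite ffunE.
    by move=> i; rewrite !ffunE (wdistxx hS).
  by move=> x y -> ->.
rewrite ecard_fin; last exact: finite_set1.
by rewrite fset_set1 cardfs1.
Qed.

End Spath.

Set Implicit Arguments.
Unset Strict Implicit.
Unset Printing Implicit Defensive.
Import Order.TTheory GRing.Theory Num.Theory.
Local Open Scope classical_set_scope.

Section Limits.
Variable R : realType.
Local Open Scope ereal_scope.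

Lemma limn_esup_le (u v : (\bar R)^nat) : (forall n, u n <= v n) ->
  limn_esup u <= limn_esup v.
Proof.
move=> h; rewrite !limn_esup_lim; apply: lee_lim; try exact: is_cvg_esups.
apply: nearW => n; apply: ge_ereal_sup => _ [k /= nk <-].
apply: le_trans (h k) _; apply: ereal_sup_ubound; by exists k.
Qed.

Lemma limsup_ub (u : (\bar R)^nat) c : (forall n, u n <= c) -> limn_esup u <= c.
Proof.
move=> h; rewrite limn_esup_lim; apply: lime_le; first exact: is_cvg_esups.
by apply: nearW => n; apply: ge_ereal_sup => _ [k /= nk <-].
Qed.

Lemma limsup_lb (u : (\bar R)^nat) c :
  (forall n, exists k, (n <= k)%N /\ c <= u k) -> c <= limn_esup u.
Proof.
move=> h; rewrite limn_esup_lim; apply: lime_ge; first exact: is_cvg_esups.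
apply: nearW => n; have [k [nk ck]] := h n.
by apply: le_trans ck _; apply: ereal_sup_ubound; exists k.
Qed.

End Limits.

Section Entropy.
Variable G : groupType.
Variable S : seq G.
Hypothesis hS : generates S.
Variable R : realType.
Local Open Scope ereal_scope.

Definition uu (Rad delta : R) (n : nat) : \bar R :=
  ((n%:R)^-1)%:E * lne (spath S n Rad delta 1%g).
Definition gg (delta Rad : R) : \bar R := limn_esup (uu Rad delta).
Definition hh (delta : R) : \bar R := lim (gg delta Rad @[Rad --> +oo%R]).

Lemma hinfE : hinf R S = lim (hh delta @[delta --> +oo%R]).
Proof. by []. Qed.

Lemma spath_ge0 n (Rad delta : R) : 0 <= spath S n Rad delta 1%g.
Proof.
apply: ereal_sup_ubound; exists set0 => //.
  by split => //; move=> p q.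
by rewrite ecard_fin ?fset_set0 ?cardfs0 //; exact: finite_set0.
Qed.

Lemma spath_anti n (delta R1 R2 : R) : (R1 <= R2)%R ->
  spath S n R2 delta 1%g <= spath S n R1 delta 1%g.
Proof.
move=> h; apply: ereal_sup_le => _ [P [Ps Psep] <-]; exists P => //; split => //.
by move=> p q Pp Pq pq; apply: le_trans h _; apply: Psep.
Qed.

Lemma gg_anti delta : {homo gg delta : a b / (a <= b)%R >-> b <= a}.
Proof.
move=> a b ab; apply: limn_esup_le => n; apply: lee_wpmul2l.
  by rewrite lee_fin invr_ge0 ler0n.
by rewrite lee_lne ?in_itv /= ?leey ?spath_ge0 //; apply: spath_anti.
Qed.

Lemma hhE delta : hh delta = ereal_inf (range (gg delta)).
Proof. by apply: cvg_lim => //; apply: nonincreasing_cvge; apply: gg_anti. Qed.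

End Entropy.

Set Implicit Arguments.
Unset Strict Implicit.
Unset Printing Implicit Defensive.
Import Order.TTheory GRing.Theory Num.Theory.
Local Open Scope classical_set_scope.

Section DirA.
Variable G : groupType.
Variable S : seq G.
Hypothesis hS : generates S.
Variable R : realType.
Local Open Scope ring_scope.

Lemma growth_exp_ub (D r : nat) : (size (sx S) <= D)%N ->
  (growth S r)%:R <= D%:R * expR (D%:R * r%:R) :> R.
Proof.
move=> kD.
have D1 : (1 <= D)%N by apply: leq_trans kD.
have h1 : (growth S r <= D ^ r)%N.
  apply: (leq_trans (growth_le hS r)).
  by case: r => // r; rewrite leq_exp2r.
apply: (@le_trans _ _ ((D ^ r)%:R)); first by rewrite ler_nat.
rewrite natrX.
have hD : (D%:R : R) ^+ r <= expR D%:R ^+ r.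
  apply: lerXn2r; rewrite ?nnegrE ?ler0n ?expR_ge0 //.
  by apply: le_trans (expR_ge1Dx _); rewrite lerDr.
apply: le_trans hD _; rewrite -expRM_natr.
rewrite -[X in X <= _]mul1r; apply: ler_pM; rewrite ?ler1n ?expR_ge0 //.
Qed.

Lemma arithA (n J kb E r : nat) (L e : R) : (0 < n)%N -> (J * kb <= n)%N ->
  kb = (E * r)%N -> (0 < E)%N -> (0 < r)%N -> 0 <= L -> L < r%:R -> E%:R^-1 < e ->
  n%:R^-1 * (J%:R * L) <= e.
Proof.
move=> n0 Jn kbE E0 r0 L0 Lr Ee.
have kb0 : (0 < kb)%N by rewrite kbE muln_gt0 E0 r0.
have h1 : n%:R^-1 * J%:R <= kb%:R^-1 :> R.
  have n0' : (0 < n%:R :> R) by rewrite ltr0n.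
  have kb0' : (0 < kb%:R :> R) by rewrite ltr0n.
  rewrite mulrC (ler_pdivrMr _ _ n0') mulrC (ler_pdivlMr _ _ kb0').
  by rewrite -natrM ler_nat.
have h2 : n%:R^-1 * (J%:R * L) <= kb%:R^-1 * L.
  by rewrite mulrA ler_wpM2r.
apply: le_trans h2 _.
have h3 : kb%:R^-1 * L <= kb%:R^-1 * r%:R :> R.
  by rewrite ler_wpM2l ?invr_ge0 ?ler0n // ltW.
apply: le_trans h3 _.
rewrite kbE natrM invfM -mulrA mulVf ?pnatr_eq0 -?lt0n // mulr1.
exact: ltW.
Qed.

Lemma hh_zero : ~ exp_growth R S -> forall delta : R, 1 <= delta -> hh S delta = 0%E.
Proof.
move=> nexp delta d1.
have d0 : 0 <= delta by apply: le_trans d1.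
set dn := Num.truncn delta.
have dn1 : (1 <= dn)%N by rewrite truncn_ge_nat.
apply/eqP; rewrite eq_le; apply/andP; split; last first.
  rewrite hhE //; apply: le_ereal_inf_tmp => _ [Rad _ <-].
  apply: limsup_lb => n; exists n; split => //.
  apply: mule_ge0; first by rewrite lee_fin invr_ge0 ler0n.
  by rewrite lne_ge0; apply: spath_ge1.
apply/lee_addgt0Pr => e e0; rewrite add0e.
set k := size (sx S).
set E := ((Num.truncn (e^-1)).+1 + k)%N.
have E0 : (0 < E)%N by rewrite /E addSn.
have Ee : E%:R^-1 < e.
  rewrite invf_plt ?posrE ?ltr0n //.
  by apply: lt_le_trans (truncnS_gt _) _; rewrite ler_nat /E leq_addr.
set D := (dn * E)%N.
have kE : (k <= E)%N by rewrite /E leq_addl.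
have kD : (k <= D)%N by apply: leq_trans kE _; rewrite /D leq_pmull.
have ex : exists r : nat, ~ (expR (r%:R : R) <= D%:R * (growth S (D * r))%:R).
  apply: contrapT => h; apply: nexp.
  exists D => r; split.
    exact: growth_exp_ub.
  by apply: contrapT => h'; apply: h; exists r.
have [r hr] := ex.
have r0 : (0 < r)%N.
  case: r hr => // hr; exfalso; apply: hr; rewrite expR0 muln0.
  rewrite -natrM ler1n muln_gt0 growth_ge1 // andbT /D muln_gt0 E0 andbT //.
move/negP: hr; rewrite -ltNge => hr.
set kb := (E * r)%N.
have kbdn : (kb * dn = D * r)%N by rewrite /kb /D; ring.
set Rad0 : R := ((2 * kb * dn).+1)%:R.
rewrite hhE.
have hinf0 : (ereal_inf (range (gg S delta)) <= gg S delta Rad0)%E.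
  by apply: ereal_inf_lbound; exists Rad0.
apply: le_trans hinf0 _.
apply: limsup_ub => n.
case: n => [|n].
  by rewrite /uu invr0 mul0e lee_fin ltW.
have kb0 : (0 < kb)%N by rewrite /kb muln_gt0 E0 r0.
have hRad : ((2 * kb * dn)%:R < Rad0) by rewrite ltr_nat.
have hup := spath_upper hS n.+1 d0 kb0 hRad.
rewrite -/dn in hup.
set gr := growth S (kb * dn) in hup.
set J := (n.+1 %/ kb)%N in hup.
have gr1 : (1 <= gr)%N by apply: growth_ge1.
have gr0 : (0 < gr%:R :> R) by rewrite ltr0n.
have hL : (lne (spath S n.+1 Rad0 delta 1%g) <= (J%:R * ln (gr%:R : R))%:E)%E.
  have -> : (J%:R * ln (gr%:R : R)) = ln (((gr ^ J)%N)%:R).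
    by rewrite natrX lnXn // mulr_natl.
  rewrite -lne_EFin ?ltr0n ?expn_gt0 ?gr1 //.
  by rewrite lee_lne ?in_itv /= ?leey ?spath_ge0 ?lee_fin ?ler0n.
have Jn : (J * kb <= n.+1)%N by rewrite /J leq_trunc_div.
have lnr : ln (gr%:R : R) < r%:R.
  have e1 : growth S (D * r) = gr by rewrite /gr kbdn.
  rewrite e1 in hr.
  have D0 : (0 < D%:R :> R) by rewrite ltr0n /D muln_gt0 E0 andbT.
  apply: (@le_lt_trans _ _ (ln (D%:R * gr%:R : R))).
    rewrite ler_ln ?posrE ?mulr_gt0 //.
    by rewrite -natrM ler_nat leq_pmull // /D muln_gt0 E0 andbT.
  by rewrite -[X in _ < X](expRK (r%:R)) ltr_ln ?posrE ?mulr_gt0 ?expR_gt0.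
rewrite /uu; apply: le_trans (lee_wpmul2l _ hL) _.
  by rewrite lee_fin invr_ge0 ler0n.
rewrite -EFinM lee_fin.
apply: (@arithA n.+1 J kb E r) => //.
by apply: ln_ge0; rewrite ler1n.
Qed.
End DirA.

Set Implicit Arguments.
Unset Strict Implicit.
Unset Printing Implicit Defensive.
Import Order.TTheory GRing.Theory Num.Theory.
Local Open Scope classical_set_scope.

Section DirB.
Variable G : groupType.
Variable S : seq G.
Hypothesis hS : generates S.
Variable R : realType.
Local Open Scope ring_scope.

Lemma arithB (D r dn : nat) (X : R) : (0 < D)%N -> (0 < r)%N ->
  r%:R * dn%:R - r%:R <= X -> dn%:R / D%:R - 1 <= (D * r)%:R^-1 * X.
Proof.
move=> D0 r0 hX.
have D0' : (0 < D%:R :> R) by rewrite ltr0n.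
have r0' : (0 < r%:R :> R) by rewrite ltr0n.
have Dr0 : (0 < (D * r)%:R :> R) by rewrite natrM mulr_gt0.
apply: (@le_trans _ _ ((D * r)%:R^-1 * (r%:R * dn%:R - r%:R))); last first.
  by rewrite ler_wpM2l // invr_ge0 ltW.
have -> : (D * r)%:R^-1 * (r%:R * dn%:R - r%:R) = (dn%:R - 1) / D%:R :> R.
  rewrite natrM; field.
  by rewrite !gt_eqF.
rewrite mulrBl lerD2l lerN2 mul1r invf_le1 //.
by rewrite ler1n.
Qed.

Lemma hh_lb : exp_growth R S -> exists D : nat, (0 < D)%N /\
  forall delta : R, 1 <= delta ->
    (((Num.truncn delta)%:R / D%:R - 1)%:E <= hh S delta)%E.
Proof.
move=> [D hD].
have D0 : (0 < D)%N.
  case: D hD => // hD; have [_] := hD 0%N; rewrite mul0r expR0.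
  by rewrite ler10.
exists D; split => // delta d1.
have d0 : 0 <= delta by apply: le_trans d1.
set dn := Num.truncn delta.
have dn1 : (1 <= dn)%N by rewrite truncn_ge_nat.
rewrite hhE; apply: le_ereal_inf_tmp => _ [Rad _ <-].
set t := Num.truncn Rad.
have Radt : Rad <= t.+1%:R by apply: ltW; apply: truncnS_gt.
set b := growth S t.
have b1 : (1 <= b)%N by apply: growth_ge1.
set r := (Num.truncn (ln (D%:R : R) + ln (b%:R : R))).+1.
have r0 : (0 < r)%N by [].
have hr : ln (D%:R : R) + ln (b%:R : R) < r%:R by apply: truncnS_gt.
set m := (D * r)%N.
have m0 : (0 < m)%N by rewrite /m muln_gt0 D0 r0.
set A := fset_set (wball S 1 (m * dn)%N).
have Afin : finite_set (wball S 1 (m * dn)%N) := ball_finite hS 1 (m * dn)%N.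
have [N [NA Nsep Ncard]] := net_ex hS t (leqnn #|` A|).
have NB : forall x, x \in N -> (wdist S 1 x <= m * dn)%N.
  by move=> x /(fsubsetP NA); rewrite in_fset_set // inE.
have hA : #|` A| = growth S (D * (r * dn)).
  have e : (m * dn = D * (r * dn))%N by rewrite /m mulnA.
  by rewrite /A (growth_ball hS) e.
have A1 : (1 <= #|` A|)%N by rewrite hA (growth_ge1 hS).
have N1 : (1 <= #|` N|)%N.
  by rewrite lt0n; apply/eqP => h; move: Ncard A1; rewrite h mul0n; lia.
have N0 : (0 < (#|` N|)%:R :> R) by rewrite ltr0n.
have hlnN : r%:R * dn%:R - r%:R <= ln ((#|` N|)%:R : R).
  have [_ h2] := hD (r * dn)%N; rewrite -hA in h2.
  have hAl : (r * dn)%:R <= ln (D%:R : R) + ln ((#|` A|)%:R : R).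
    rewrite -lnM ?posrE ?ltr0n // -[X in X <= _](expRK) ler_ln ?posrE ?expR_gt0 //.
    by rewrite mulr_gt0 ?ltr0n.
  have hAN : ln ((#|` A|)%:R : R) <= ln ((#|` N|)%:R : R) + ln (b%:R : R).
    by rewrite -lnM ?posrE ?ltr0n // ler_ln ?posrE ?mulr_gt0 ?ltr0n // -natrM ler_nat.
  rewrite natrM in hAl; lra.
apply: limsup_lb => n; exists (n.+1 * m)%N; split.
  by apply: leq_trans (leqnSn n) _; rewrite leq_pmulr.
have hsp := @spath_lower G S hS R Rad delta dn m t n.+1 N m0 NB Nsep (erefl dn) d0 Radt.
have hL : ((n.+1%:R * ln ((#|` N|)%:R : R))%:E <= lne (spath S (n.+1 * m) Rad delta 1%g))%E.
  have -> : (n.+1%:R * ln ((#|` N|)%:R : R)) = ln (((#|` N| ^ n.+1)%N)%:R).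
    by rewrite natrX lnXn // mulr_natl.
  rewrite -lne_EFin ?ltr0n ?expn_gt0 ?N1 //.
  by rewrite lee_lne ?in_itv /= ?leey ?spath_ge0 ?lee_fin ?ler0n.
rewrite /uu; apply: le_trans (lee_wpmul2l _ hL).
  rewrite -EFinM lee_fin.
  have -> : (n.+1 * m)%:R^-1 * (n.+1%:R * ln ((#|` N|)%:R : R)) = m%:R^-1 * ln ((#|` N|)%:R : R).
    have m0' : (m%:R != 0 :> R) by rewrite pnatr_eq0 -lt0n.
    have n0' : (n.+1%:R != 0 :> R) by rewrite pnatr_eq0.
    by rewrite natrM; field; rewrite m0' nat1r.
  exact: arithB.
by rewrite lee_fin invr_ge0 ler0n.
Qed.

End DirB.

Set Implicit Arguments.
Unset Strict Implicit.
Unset Printing Implicit Defensive.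
Import Order.TTheory GRing.Theory Num.Theory.
Local Open Scope classical_set_scope.
Local Open Scope ring_scope.

Lemma hinf_zero (R : realType) (G : groupType) (S : seq G) (hS : generates S) :
  ~ exp_growth R S -> hinf R S = 0%E.
Proof.
move=> ne; rewrite hinfE; apply: cvg_lim => //; apply: cvg_near_cst.
near=> delta; apply: (hh_zero hS ne).
near: delta; apply: nbhs_pinfty_ge; exact: num_real.
Unshelve. all: by end_near. Qed.

Lemma hinf_oo (R : realType) (G : groupType) (S : seq G) (hS : generates S) :
  exp_growth R S -> hinf R S = +oo%E.
Proof.
move=> /(hh_lb hS) [D [D0 hD]]; rewrite hinfE; apply: cvg_lim => //.
apply/cvgeyPge => A.
near=> delta.
have d1 : 1 <= delta by near: delta; apply: nbhs_pinfty_ge; exact: num_real.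
have dA : (A + 2) * D%:R <= delta by near: delta; apply: nbhs_pinfty_ge; exact: num_real.
apply: le_trans (hD delta d1); rewrite lee_fin.
have tr := truncnS_gt delta.
have D1 : (1 <= D%:R :> R) by rewrite ler1n.
have D0' : (0 < D%:R :> R) by rewrite ltr0n.
rewrite lerBrDr ler_pdivlMr //.
rewrite -natr1 in tr.
nra.
Unshelve. all: by end_near. Qed.

Theorem mainTheorem18 (R : realType) (G : groupType) (S : seq G)
    (hS : generates S) :
  (@exp_growth G R S <-> @hinf G R S = +oo%E) /\
  (~ @exp_growth G R S -> @hinf G R S = 0%E).
Proof.
split; last exact: hinf_zero.
split; first exact: hinf_oo.
move=> h; apply: contrapT => ne.
by move: h; rewrite (hinf_zero hS ne).
Qed.
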